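(* For every $\delta\in(0,\frac12]$ there exists $\alpha=\alpha(\delta)\in(0,1]$ such that $$\lambda\cdot a_1^{1+\alpha}\cdot(2-a_1x)+a_2^{1+\alpha}\cdot(2-a_2x)\le(1+\lambda)\cdot(2-x)$$ for every $x\ge\delta$ and every $\lambda,y\ge0$ with $\lambda y\le1$, where $a_1=1+y$ and $a_2=1-\lambda y$. *)

(* Defs.v *)
From Stdlib Require Import Reals.
Open Scope R_scope.

(* Real power a^e for a >= 0 and e > 0, with the convention 0^e = 0
   (Rpower alone gives Rpower 0 e = exp (e * ln 0) = 1, which is wrong). *)
Definition rpow (a e : R) : R := if Req_EM_T a 0 then 0 else Rpower a e.

(* Main.v *)
Require Import Defs.
From Stdlib Require Import Reals Lra.
Open Scope R_scope.

Lemma dgen a b c d e1 e2 t : 0 < t ->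
  derivable_pt_lim (fun t => a + b*t + c*Rpower t e1 + d*Rpower t e2) t
    (b + c*(e1*Rpower t (e1-1)) + d*(e2*Rpower t (e2-1))).
Proof.
  intros Ht.
  replace (b + c*(e1*Rpower t (e1-1)) + d*(e2*Rpower t (e2-1)))
    with (0 + b*1 + c*(e1*Rpower t (e1-1)) + d*(e2*Rpower t (e2-1))) by ring.
  repeat apply derivable_pt_lim_plus.
  - apply derivable_pt_lim_const.
  - apply derivable_pt_lim_scal. apply derivable_pt_lim_id.
  - apply derivable_pt_lim_scal. apply derivable_pt_lim_power; auto.
  - apply derivable_pt_lim_scal. apply derivable_pt_lim_power; auto.
Qed.

Lemma incr f f' a b : a <= b -> (forall c, a<=c<=b -> derivable_pt_lim f c (f' c)) ->
  (forall c, a<c<b -> 0 <= f' c) -> f a <= f b.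
Proof.
  intros Hab Hd Hp. destruct (Req_dec a b) as [->|Hne]; [lra|].
  destruct (MVT_cor2 f f' a b) as [c [Hc1 Hc2]]; [lra|assumption|].
  specialize (Hp c Hc2). nra.
Qed.

Lemma decr f f' a b : a <= b -> (forall c, a<=c<=b -> derivable_pt_lim f c (f' c)) ->
  (forall c, a<c<b -> f' c <= 0) -> f b <= f a.
Proof.
  intros Hab Hd Hp. destruct (Req_dec a b) as [->|Hne]; [lra|].
  destruct (MVT_cor2 f f' a b) as [c [Hc1 Hc2]]; [lra|assumption|].
  specialize (Hp c Hc2). nra.
Qed.
Lemma Rpower1 e : Rpower 1 e = 1.
Proof. unfold Rpower; rewrite ln_1, Rmult_0_r; apply exp_0. Qed.
Lemma Rp_succ t e : 0<t -> Rpower t (e+1) = Rpower t e * t.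
Proof. intros; rewrite Rpower_plus, Rpower_1; auto. Qed.
Lemma Rp_pos t e : 0 < Rpower t e.
Proof. unfold Rpower; apply exp_pos. Qed.

Definition kk a x := 2*(1+a) - x*(2+a).
Definition G a x t := ((2-x) - kk a x) + kk a x*t + (-2)*Rpower t (1+a) + x*Rpower t (2+a).
Definition G1 a x t := kk a x + 0*t + (-(2*(1+a)))*Rpower t a + (x*(2+a))*Rpower t (1+a).
Definition G2 a x t := 0 + (-(2*(1+a)))*(a*Rpower t (a-1)) + (x*(2+a))*((1+a)*Rpower t (1+a-1)).

Lemma dG a x t : 0 < t -> derivable_pt_lim (G a x) t (G1 a x t).
Proof.
  intros Ht. unfold G.
  replace (G1 a x t) with (kk a x + (-2)*((1+a)*Rpower t (1+a-1)) + x*((2+a)*Rpower t (2+a-1))).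
  - apply dgen; auto.
  - unfold G1. replace (1+a-1) with a by ring. replace (2+a-1) with (1+a) by ring. ring.
Qed.

Lemma dG1 a x t : 0 < t -> derivable_pt_lim (G1 a x) t (G2 a x t).
Proof. intros Ht. unfold G1, G2. apply dgen; auto. Qed.

Lemma G2_eq a x t : 0 < t -> G2 a x t = (1+a) * Rpower t (a-1) * (x*(2+a)*t - 2*a).
Proof.
  intros Ht. unfold G2. replace (1+a-1) with ((a-1)+1) by ring. rewrite Rp_succ; auto. ring.
Qed.

Lemma tangent d x t : 0 < d <= 1/2 -> d <= x -> 0 <= t ->
  rpow t (1 + d/2) * (2 - t*x) <= (2-x) + kk (d/2) x * (t-1).
Proof.
  intros Hd Hx Ht. set (a := d/2).
  assert (Ha : 0 < a <= 1/4) by (unfold a; lra).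
  assert (Hg0 : 0 <= x*(1+a) - 2*a) by (unfold a in *; nra).
  unfold rpow. destruct (Req_EM_T t 0) as [->|Htn].
  { unfold kk. nra. }
  assert (Htp : 0 < t) by lra.
  assert (Heq : forall s, 0 < s -> Rpower s (1+a) * (2 - s*x) = (2-x) + kk a x*(s-1) - G a x s).
  { intros s Hs. unfold G. replace (2+a) with ((1+a)+1) by ring. rewrite (Rp_succ s (1+a)); auto. ring. }
  rewrite Heq; auto.
  enough (0 <= G a x t) by lra.
  set (t0 := 2*a/(x*(2+a))).
  assert (Ht0 : 0 < t0 < 1).
  { unfold t0. split. apply Rdiv_lt_0_compat; nra.
    apply Rmult_lt_reg_r with (x*(2+a)); [nra|]. unfold Rdiv. rewrite Rmult_assoc, Rinv_l; nra. }
  assert (HG2p : forall s, t0 <= s -> 0 <= G2 a x s).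
  { intros s Hs. rewrite G2_eq by lra.
    assert (x*(2+a)*s - 2*a >= 0).
    { unfold t0 in Hs. apply Rmult_le_compat_r with (r := x*(2+a)) in Hs; [|nra].
      unfold Rdiv in Hs. rewrite Rmult_assoc, Rinv_l in Hs; nra. }
    pose proof (Rp_pos s (a-1)). apply Rmult_le_pos; [|lra]. apply Rmult_le_pos; lra. }
  assert (HG2n : forall s, 0 < s <= t0 -> G2 a x s <= 0).
  { intros s Hs. rewrite G2_eq by lra.
    assert (x*(2+a)*s - 2*a <= 0).
    { destruct Hs as [_ Hs]. unfold t0 in Hs. apply Rmult_le_compat_r with (r := x*(2+a)) in Hs; [|nra].
      unfold Rdiv in Hs. rewrite Rmult_assoc, Rinv_l in Hs; nra. }
    pose proof (Rp_pos s (a-1)). assert (0 <= (1+a)*Rpower s (a-1)) by (apply Rmult_le_pos; lra). nra. }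
  assert (HG11 : G1 a x 1 = 0).
  { unfold G1, kk. rewrite !Rpower1. ring. }
  assert (HG1 : G a x 1 = 0).
  { unfold G, kk. rewrite !Rpower1. ring. }
  assert (HA1 : forall s, 1 <= s -> 0 <= G1 a x s).
  { intros s Hs. rewrite <- HG11. apply (incr (G1 a x) (G2 a x)); auto.
    intros c Hc; apply dG1; lra. intros c Hc; apply HG2p; lra. }
  assert (HA2 : forall s, t0 <= s <= 1 -> G1 a x s <= 0).
  { intros s Hs. rewrite <- HG11. apply (incr (G1 a x) (G2 a x)); try lra.
    intros c Hc; apply dG1; lra. intros c Hc; apply HG2p; lra. }
  assert (HD : forall u v, 0 < u -> u <= v -> v <= t0 -> G1 a x v <= G1 a x u).
  { intros u v Hu Huv Hv. apply (decr (G1 a x) (G2 a x)); auto.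
    intros c Hc; apply dG1; lra. intros c Hc; apply HG2n; lra. }
  destruct (Rle_dec 1 t) as [H1|H1].
  { rewrite <- HG1. apply (incr (G a x) (G1 a x)); auto.
    intros c Hc; apply dG; lra. intros c Hc; apply HA1; lra. }
  destruct (Rle_dec t0 t) as [H2|H2].
  { rewrite <- HG1. apply (decr (G a x) (G1 a x)); try lra.
    intros c Hc; apply dG; lra. intros c Hc; apply HA2; lra. }
  destruct (Rle_dec (G1 a x t) 0) as [H3|H3].
  { rewrite <- HG1. apply (decr (G a x) (G1 a x)); try lra.
    intros c Hc; apply dG; lra. intros c Hc.
    destruct (Rle_dec c t0). { pose proof (HD t c); lra. } apply HA2; lra. }
  assert (Hs : forall s, 0 < s < t -> s * (kk a x - 2) <= G a x t).
  { intros s Hs.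
    assert (G a x s <= G a x t).
    { apply (incr (G a x) (G1 a x)); try lra. intros c Hc; apply dG; lra.
      intros c Hc. pose proof (HD c t). lra. }
    assert (Rpower s (1+a) <= s).
    { replace (1+a) with (a+1) by ring. rewrite Rp_succ by lra.
      assert (Rpower s a <= 1). { rewrite <- (Rpower1 a). apply Rle_Rpower_l; lra. }
      pose proof (Rp_pos s a). nra. }
    assert (0 <= x * Rpower s (2+a)) by (pose proof (Rp_pos s (2+a)); nra).
    unfold G in *. unfold kk in *. nra. }
  destruct (Rle_dec 0 (G a x t)) as [H4|H4]; [assumption|exfalso].
  set (m := Rabs (kk a x - 2) + 1).
  assert (Hm : 1 <= m) by (unfold m; pose proof (Rabs_pos (kk a x - 2)); lra).
  set (s := Rmin (t/2) (- G a x t / (2*m))).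
  assert (Hs1 : 0 < s).
  { unfold s. apply Rmin_pos. lra. apply Rdiv_lt_0_compat; lra. }
  assert (Hs2 : s <= - G a x t / (2*m)) by apply Rmin_r.
  assert (Hs3 : s <= t/2) by apply Rmin_l.
  specialize (Hs s ltac:(lra)).
  assert (Hs4 : s * (2*m) <= - G a x t).
  { apply Rmult_le_compat_r with (r := 2*m) in Hs2; [|lra].
    unfold Rdiv in Hs2. rewrite Rmult_assoc, Rinv_l in Hs2; lra. }
  assert (- (kk a x - 2) <= Rabs (kk a x - 2)) by (rewrite <- Rabs_Ropp; apply Rle_abs).
  unfold m in *. nra.
Qed.

Theorem lemma2p21 :
  forall delta : R, 0 < delta <= 1/2 ->
  exists alpha : R, 0 < alpha <= 1 /\
    forall x lambda y : R,
      delta <= x -> 0 <= lambda -> 0 <= y -> lambda * y <= 1 ->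
      lambda * rpow (1 + y) (1 + alpha) * (2 - (1 + y) * x)
        + rpow (1 - lambda * y) (1 + alpha) * (2 - (1 - lambda * y) * x)
      <= (1 + lambda) * (2 - x).
Proof.
  intros d Hd. exists (d/2). split; [lra|].
  intros x l y Hx Hl Hy Hly.
  pose proof (tangent d x (1+y) Hd Hx ltac:(lra)) as T1.
  pose proof (tangent d x (1-l*y) Hd Hx ltac:(lra)) as T2.
  apply Rmult_le_compat_l with (r := l) in T1; auto.
  rewrite Rmult_assoc. nra.
Qed.
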